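(* Let $A=(A,m_A,\mu_A,\Delta_A,\varepsilon_A)$ be a commutative bialgebra and let $\text{Ш}_e(A)=(\text{Ш}_e(A),\diamond,P_e,j_A)$ be the free commutative extended Rota-Baxter algebra of weight $(\lambda,\kappa)$ on $A$. Let $\mu\in\mathbf{k}$ be a root of $t^2-\lambda t+\kappa$. Then there exists a unique homomorphism $\varepsilon_e:\text{Ш}_e(A)\to\mathbf{k}$ of extended Rota-Baxter algebras of weight $(\lambda,\kappa)$ (where $\mathbf{k}$ carries the operator $-\mu\,\mathrm{id}$) such that $$\varepsilon_e\circ j_A=\varepsilon_A\quad\text{and}\quad \varepsilon_e\circ P_e=-\mu\,\mathrm{id}\circ\varepsilon_e.$$
   Context: $\mathbf{k}$ is a commutative unitary ring. An extended Rota-Baxter operator of weight $(\lambda,\kappa)$ on an algebra $R$ is a linear $P:R\to R$ with $P(x)P(y)=P(xP(y))+P(P(x)y)+\lambda P(xy)+\kappa xy$. $\text{Ш}_e(A)=\bigoplus_{n\ge1}A^{\otimes n}$, $P_e(\mathfrak{a})=1_A\otimes\mathfrak{a}$, $j_A:A\to\text{Ш}_e(A)$ the inclusion $A=A^{\otimes1}$, and $\diamond$ the product defined recursively on pure tensors $\mathfrak{a}=a_0\otimes\mathfrak{a}'\in A^{\otimes(m+1)}$, $\mathfrak{b}=b_0\otimes\mathfrak{b}'\in A^{\otimes(n+1)}$ by $a_0b_0$ ($m=n=0$), $a_0b_0\otimes\mathfrak{b}'$ ($m=0,n\ge1$), $a_0b_0\otimes\mathfrak{a}'$ ($m\ge1,n=0$),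 and $a_0b_0\otimes(\mathfrak{a}'\diamond(1_A\otimes\mathfrak{b}')+(1_A\otimes\mathfrak{a}')\diamond\mathfrak{b}'+\lambda\mathfrak{a}'\diamond\mathfrak{b}')+\kappa a_0b_0(\mathfrak{a}'\diamond\mathfrak{b}')$ ($m,n\ge1$). It is the free commutative extended Rota-Baxter algebra of weight $(\lambda,\kappa)$ on $A$ (universal property with respect to algebra homomorphisms from $A$). $-\mu\,\mathrm{id}$ is an extended Rota-Baxter operator of weight $(\lambda,\kappa)$ on $\mathbf{k}$ since $\mu^2-\lambda\mu+\kappa=0$. *)

(* Defs.v *)
From HB Require Import structures.
From mathcomp Require Import all_boot all_order all_algebra.
Set Implicit Arguments. Unset Strict Implicit. Unset Printing Implicit Defensive.
Import GRing.Theory.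
Local Open Scope ring_scope.

Definition ext_RB_op (k : comPzRingType) (R : comAlgType k) (lam kap : k)
    (P : {linear R -> R}) : Prop :=
  forall x y : R,
    P x * P y = P (x * P y) + P (P x * y) + lam *: P (x * y) + kap *: (x * y).

Definition ext_RB_hom (k : comPzRingType) (R S : comAlgType k)
    (P : R -> R) (Q : S -> S) (g : {lrmorphism R -> S}) : Prop :=
  forall x : R, g (P x) = Q (g x).

Definition free_comm_ext_RB (k : comPzRingType) (lam kap : k) (A S : comAlgType k)
    (PS : {linear S -> S}) (j : {lrmorphism A -> S}) : Prop :=
  ext_RB_op lam kap PS /\
  forall (R : comAlgType k) (PR : {linear R -> R}),
    ext_RB_op lam kap PR ->
    forall f : {lrmorphism A -> R},
      exists g : {lrmorphism S -> R},
        [/\ ext_RB_hom PS PR g, (forall a, g (j a) = f a) &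
            forall g' : {lrmorphism S -> R},
              ext_RB_hom PS PR g' -> (forall a, g' (j a) = f a) -> g' =1 g].

Definition negmul_op (k : comPzRingType) (mu : k) : k^o -> k^o :=
  fun x => - mu * x.

(* Main.v *)
Require Import Defs.
From HB Require Import structures.
From mathcomp Require Import all_boot all_order all_algebra.
From mathcomp Require Import ring.
Import GRing.Theory.
Local Open Scope ring_scope.

Section Mk.
Variables (k : comPzRingType) (S T : lalgType k) (f : S -> T).
Hypotheses (hB : forall x y, f (x - y) = f x - f y)
  (h1 : f 1 = 1) (hM : forall x y, f (x * y) = f x * f y)
  (hZ : forall (a : k) x, f (a *: x) = a *: f x).
Definition fp : S -> T := f.
Lemma fp_z : zmod_morphism fp. Proof. exact: hB. Qed.
Lemma fp_m : monoid_morphism fp. Proof. by split; [exact: h1|exact: hM]. Qed.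
Lemma fp_s : scalable fp. Proof. move=> a x; exact: hZ. Qed.
HB.instance Definition _ := GRing.isZmodMorphism.Build S T fp fp_z.
HB.instance Definition _ := GRing.isMonoidMorphism.Build S T fp fp_m.
HB.instance Definition _ := GRing.isScalable.Build k S T *:%R fp fp_s.
Lemma mk_lrm : exists e : {lrmorphism S -> T}, forall x, e x = f x.
Proof. by exists fp. Qed.
End Mk.

Section Mk2.
Variables (k : comPzRingType) (S : lalgType k) (f : S -> k^o).
Hypotheses (hB : forall x y, f (x - y) = f x - f y)
  (h1 : f 1 = 1) (hM : forall x y, f (x * y) = f x * f y)
  (hZ : forall (a : k) x, f (a *: x) = a *: f x).
Definition fq : S -> k^o := f.
Lemma fq_z : zmod_morphism fq. Proof. exact: hB. Qed.
Lemma fq_m : monoid_morphism fq. Proof. by split; [exact: h1|exact: hM]. Qed.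
Lemma fq_s : scalable fq. Proof. move=> a x; exact: hZ. Qed.
HB.instance Definition _ := GRing.isZmodMorphism.Build S k^o fq fq_z.
HB.instance Definition _ := GRing.isMonoidMorphism.Build S k^o fq fq_m.
HB.instance Definition _ := GRing.isScalable.Build k S k^o *:%R fq fq_s.
Lemma mk_lrm2 : exists e : {lrmorphism S -> k^o}, forall x, e x = f x.
Proof. by exists fq. Qed.
End Mk2.

Section Ko.
Variables (k : comPzRingType).
Hypothesis Hk : (1 : k) != 0.
Definition ko : Type := k.
HB.instance Definition _ := GRing.ComPzRing.on ko.
HB.instance Definition _ := GRing.PzSemiRing_isNonZero.Build ko Hk.
HB.instance Definition _ :=
  @GRing.Nmodule_isLSemiModule.Build k ko
    (fun a (x : ko) => (a : ko) * x) (@mulrA ko) (@mul0r ko) (@mul1r ko)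
    (fun a => @mulrDr ko a) (fun v a b => @mulrDl ko a b v).
HB.instance Definition _ := GRing.LSemiModule_isLSemiAlgebra.Build k ko (@mulrA ko).
HB.instance Definition _ := GRing.Lalgebra_isComAlgebra.Build k ko.
Variable mu : k.
Definition negko (x : ko) : ko := - (mu : ko) * x.
Lemma negko_lin : linear negko.
Proof. move=> a x y; rewrite /negko /= !mulrDr; congr (_ + _).
  by rewrite /GRing.scale /= mulrCA. Qed.
HB.instance Definition _ := GRing.isLinear.Build k ko ko _ negko negko_lin.

Lemma main_ko (lam kap : k) (A : comAlgType k)
    (epsA : {lrmorphism A -> k^o})
    (S : comAlgType k) (Pe : {linear S -> S}) (jA : {lrmorphism A -> S})
    (Hfree : free_comm_ext_RB lam kap Pe jA)
    (Hmu : mu ^+ 2 - lam * mu + kap = 0) :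
  exists epse : {lrmorphism S -> k^o},
    [/\ (forall a : A, epse (jA a) = epsA a),
        (forall x : S, epse (Pe x) = negmul_op mu (epse x)) &
        forall e' : {lrmorphism S -> k^o},
          (forall a : A, e' (jA a) = epsA a) ->
          (forall x : S, e' (Pe x) = negmul_op mu (e' x)) ->
          e' =1 epse].
Proof.
have HRB : @ext_RB_op k ko lam kap negko.
  move=> x y /=; rewrite /negko /GRing.scale /=.
  have -> : kap = - mu ^+ 2 + lam * mu by apply/eqP; rewrite -subr_eq0 -Hmu; apply/eqP; ring.
  rewrite /ko; ring.
have [f Hf] := @mk_lrm k A ko epsA (rmorphB epsA) (rmorph1 epsA) (rmorphM epsA)
   (linearZ_LR epsA).
have [g [Hg1 Hg2 Hg3]] := Hfree.2 _ _ HRB f.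
have [e He] := @mk_lrm2 k S g (rmorphB g) (rmorph1 g) (rmorphM g) (linearZ_LR g).
exists e; split.
- by move=> a; rewrite He Hg2 Hf.
- by move=> x; rewrite !He Hg1.
move=> e' H1 H2.
have [e'' He''] := @mk_lrm k S ko e' (rmorphB e') (rmorph1 e') (rmorphM e') (linearZ_LR e').
move=> x; rewrite He -He''; apply: Hg3 => [y|a]; rewrite !He'' ?H2 ?H1 ?Hf //.
Qed.
End Ko.

Theorem lemma4p2 (k : comPzRingType) (lam kap : k) (A : comAlgType k)
    (epsA : {lrmorphism A -> k^o})
    (S : comAlgType k) (Pe : {linear S -> S}) (jA : {lrmorphism A -> S})
    (Hfree : free_comm_ext_RB lam kap Pe jA)
    (mu : k) (Hmu : mu ^+ 2 - lam * mu + kap = 0) :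
  exists epse : {lrmorphism S -> k^o},
    [/\ (forall a : A, epse (jA a) = epsA a),
        (forall x : S, epse (Pe x) = negmul_op mu (epse x)) &
        forall e' : {lrmorphism S -> k^o},
          (forall a : A, e' (jA a) = epsA a) ->
          (forall x : S, e' (Pe x) = negmul_op mu (e' x)) ->
          e' =1 epse].
Proof.
have Hk : (1 : k) != 0.
  apply/eqP => H; have := @oner_neq0 A; rewrite -(scale1r (1 : A)) H scale0r.
  by rewrite eqxx.
exact: (@main_ko k Hk mu lam kap A epsA S Pe jA Hfree Hmu).
Qed.
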